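(* Let $q\in\mathbb{N}$, $q\geq3$, let $n\ge1$ and $a_1,\dots,a_n\in\mathbb{Q}\cap[0,q-1]$, and let $K$ be the attractor of the iterated function system $\{f_i(x)=\frac{x+a_i}{q}\}_{i=1}^n$, i.e. the unique nonempty compact set with $K=\bigcup_{i=1}^n f_i(K)$. Suppose $K$ is nowhere dense in $[0,1]$. Then for every $t\in(0,1)$ that has a universal $q$-adic expansion, $$K-t\subset\mathbb{Q}^c,\qquad K+t\subset\mathbb{Q}^c,\qquad \frac{K}{t}\subset\mathbb{Q}^c.$$ Moreover, for every $t\in(1,\infty)$ such that $1/t$ has a universal $q$-adic expansion, $tK\subset\mathbb{Q}^c$.
   Context: A $q$-adic expansion of $t\in(0,1)$ is a sequence $(t_k)\in\{0,1,\dots,q-1\}^{\mathbb{N}}$ with $t=\sum_{k\geq1}t_k q^{-k}$. Such an expansion is universal if for every $k\geq1$ and every word $x_1\cdots x_k\in\{0,\dots,q-1\}^k$ there is $k_0\in\mathbb{N}$ with $t_{k_0+1}\cdots t_{k_0+k}=x_1\cdots x_k$; $t$ has a universal $q$-adic expansion if some $q$-adic expansion of it is universal. Notation: $K\pm t=\{x\pm t:x\in K\}$, $tK=\{tx:x\in K\setminus\{0\}\}$, $\frac{K}{t}=\{t^{-1}x:x\in K\setminus\{0\}\}$. $\mathbb{Q}^c$ denotes the set of irrational real numbers. *)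

(* Defs.v *)
From Stdlib Require Import Reals QArith Lra Lia.
From Stdlib Require Export Reals QArith Rtopology.
Open Scope R_scope.

Definition irrational (x : R) : Prop := forall r : Q, x <> Q2R r.

(* (d 1, d 2, ...) is a q-adic expansion of t: digits in {0,..,q-1} and
   t = sum_{k>=1} d_k q^{-k}.  (d 0 is unused.) *)
Definition qadic_expansion (q : nat) (d : nat -> nat) (t : R) : Prop :=
  (forall k, (1 <= k)%nat -> (d k < q)%nat) /\
  infinite_sum (fun k => INR (d (S k)) / (INR q ^ (S k))) t.

Definition universal_seq (q : nat) (d : nat -> nat) : Prop :=
  forall (k : nat) (w : nat -> nat), (1 <= k)%nat ->
    (forall i, (1 <= i <= k)%nat -> (w i < q)%nat) ->
    exists k0 : nat, forall i, (1 <= i <= k)%nat -> d (k0 + i)%nat = w i.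

Definition has_universal_expansion (q : nat) (t : R) : Prop :=
  exists d, qadic_expansion q d t /\ universal_seq q d.

Definition is_attractor (q n : nat) (a : nat -> Q) (K : R -> Prop) : Prop :=
  (exists x, K x) /\ compact K /\
  forall y, K y <-> exists i x, (i < n)%nat /\ K x /\ y = (x + Q2R (a i)) / INR q.

Definition nowhere_dense_in01 (K : R -> Prop) : Prop :=
  ~ exists U : R -> Prop, open_set U /\ (exists x, U x /\ 0 <= x <= 1) /\
      forall x, U x -> 0 <= x <= 1 -> adherence K x.

(* Main.v *)
Require Import Defs.
From Stdlib Require Import Reals QArith Rtopology Lra Lia ZArith Classical Qreals.
Open Scope R_scope.

Fixpoint val (q : nat) (w : nat -> nat) (l : nat) : nat :=
  match l with O => O | S l => (q * val q w l + w (S l))%nat end.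

Lemma val_ext q w w' l : (forall i, (1 <= i <= l)%nat -> w i = w' i) -> val q w l = val q w' l.
Proof.
  induction l; simpl; intros H; auto.
  rewrite IHl by (intros; apply H; lia). rewrite H by lia. reflexivity.
Qed.

Lemma digits q (hq : (1 <= q)%nat) : forall l A, (A < q ^ l)%nat ->
  exists w, (forall i, (1 <= i <= l)%nat -> (w i < q)%nat) /\ val q w l = A.
Proof.
  induction l; intros A HA.
  - exists (fun _ => O). split; [intros; lia|]. simpl in *. lia.
  - assert (Hd : (A / q < q ^ l)%nat).
    { apply Nat.Div0.div_lt_upper_bound. simpl in HA. lia. }
    destruct (IHl _ Hd) as [w' [Hw' Hv]].
    exists (fun i => if Nat.eqb i (S l) then (A mod q)%nat else w' i).
    split.
    + intros i Hi. destruct (Nat.eqb_spec i (S l)).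
      * apply Nat.mod_upper_bound; lia.
      * apply Hw'; lia.
    + simpl. rewrite Nat.eqb_refl.
      rewrite (val_ext _ _ w'). 2:{ intros i Hi. destruct (Nat.eqb_spec i (S l)); [lia|auto]. }
      rewrite Hv. symmetry. apply Nat.div_mod. lia.
Qed.

Lemma div_le_pos a b c : 0 < c -> a <= b -> a / c <= b / c.
Proof. intros Hc H. unfold Rdiv. apply Rmult_le_compat_r; [left; apply Rinv_0_lt_compat|]; auto. Qed.
Lemma div_lt_pos a b c : 0 < c -> a < b -> a / c < b / c.
Proof. intros Hc H. unfold Rdiv. apply Rmult_lt_compat_r; [apply Rinv_0_lt_compat|]; auto. Qed.

Section Exp.
Variable q : nat.
Hypothesis hq : (2 <= q)%nat.
Variable d : nat -> nat.
Variable t : R.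
Hypothesis Hd : forall k, (1 <= k)%nat -> (d k < q)%nat.
Hypothesis Hs : infinite_sum (fun k => INR (d (S k)) / (INR q ^ (S k))) t.

Let qR := INR q.
Lemma qR_ge2 : 2 <= qR.
Proof. unfold qR. replace 2 with (INR 2) by (simpl; lra). apply le_INR; auto. Qed.
Lemma qpow_pos k : 0 < qR ^ k.
Proof. apply pow_lt. pose proof qR_ge2. lra. Qed.

Definition T k := qR ^ k * t - INR (val q d k).

Lemma T_rec k : T (S k) = qR * T k - INR (d (S k)).
Proof. unfold T. simpl val. rewrite plus_INR, mult_INR. simpl pow. fold qR. ring. Qed.

Lemma T_shift k0 l : T k0 = (INR (val q (fun i => d (k0 + i)%nat) l) + T (k0 + l)) / qR ^ l.
Proof.
  pose proof (qpow_pos l). induction l.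
  - rewrite Nat.add_0_r. simpl val. simpl pow. rewrite INR_0. field.
  - rewrite IHl by apply qpow_pos. replace (k0 + S l)%nat with (S (k0 + l)) by lia.
    rewrite T_rec. simpl val. rewrite plus_INR, mult_INR. fold qR. rewrite <- plus_n_Sm. simpl pow. field. split; pose proof (qpow_pos l); pose proof qR_ge2; lra.


Qed.

Lemma psum n : sum_f_R0 (fun k => INR (d (S k)) / (INR q ^ (S k))) n = INR (val q d (S n)) / qR ^ (S n).
Proof.
  induction n.
  - simpl. rewrite Nat.mul_0_r. simpl. reflexivity.
  - rewrite tech5, IHn. fold qR.
    change (val q d (S (S n))) with (q * val q d (S n) + d (S (S n)))%nat.
    rewrite plus_INR, mult_INR. fold qR.
    simpl pow. field. split; pose proof (qpow_pos n); pose proof qR_ge2; lra.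
Qed.

Lemma mono k : forall j, INR (val q d k) / qR ^ k <= INR (val q d (k + j)) / qR ^ (k + j) /\
   (INR (val q d (k+j)) + 1) / qR ^ (k+j) <= (INR (val q d k) + 1) / qR ^ k.
Proof.
  induction j.
  - rewrite Nat.add_0_r. lra.
  - destruct IHj as [H1 H2]. replace (k + S j)%nat with (S (k + j)) by lia.
    pose proof (qpow_pos (k+j)). pose proof qR_ge2.
    assert (Hdd : INR (d (S (k+j))) <= qR - 1).
    { unfold qR. assert (d (S (k+j)) + 1 <= q)%nat by (pose proof (Hd (S (k+j))); lia).
      apply le_INR in H3. rewrite plus_INR in H3. simpl in H3. lra. }
    assert (Hd0 : 0 <= INR (d (S (k+j)))) by apply pos_INR.
    change (val q d (S (k+j))) with (q * val q d (k+j) + d (S (k+j)))%nat.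
    rewrite plus_INR, mult_INR. fold qR. simpl pow. split.
    + eapply Rle_trans; [apply H1|].
      replace ((qR * INR (val q d (k + j)) + INR (d (S (k + j)))) / (qR * qR ^ (k + j)))
        with (INR (val q d (k + j)) / qR ^ (k + j) + INR (d (S (k + j))) / (qR * qR ^ (k + j))) by (field; lra).
      assert (0 <= INR (d (S (k + j))) / (qR * qR ^ (k + j))).
      { apply Rmult_le_pos; auto. left. apply Rinv_0_lt_compat. nra. }
      lra.
    + eapply Rle_trans; [|apply H2].
      replace ((INR (val q d (k + j)) + 1) / qR ^ (k + j)) with
        ((qR * INR (val q d (k + j)) + qR) / (qR * qR ^ (k + j))) by (field; lra).
      apply div_le_pos; [nra|lra].
Qed.

Lemma T_bounds k : 0 <= T k <= 1.
Proof.
  pose proof (qpow_pos k).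
  assert (Ht : INR (val q d k) / qR ^ k <= t <= (INR (val q d k) + 1) / qR ^ k).
  { split; apply Rnot_lt_le; intro Hc.
    - destruct (Hs (INR (val q d k) / qR ^ k - t)) as [N HN]; [lra|].
      specialize (HN (N + k)%nat ltac:(lia)). rewrite psum in HN.
      destruct (mono k (S N)) as [H1 _]. replace (k + S N)%nat with (S (N + k)) in H1 by lia.
      unfold R_dist in HN. apply Rabs_def2 in HN. lra.
    - destruct (Hs (t - (INR (val q d k) + 1) / qR ^ k)) as [N HN]; [lra|].
      specialize (HN (N + k)%nat ltac:(lia)). rewrite psum in HN.
      destruct (mono k (S N)) as [_ H1]. replace (k + S N)%nat with (S (N + k)) in H1 by lia.
      assert (0 < 1 / qR ^ S (N + k)) by (apply Rdiv_lt_0_compat; [lra| apply qpow_pos]).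
      unfold R_dist in HN. apply Rabs_def2 in HN.
      assert ((INR (val q d (S (N + k))) + 1) / qR ^ S (N + k) = INR (val q d (S (N + k))) / qR ^ S (N + k) + 1 / qR ^ S (N + k)).
      { field. pose proof (qpow_pos (S (N+k))). lra. }
      lra. }
  unfold T. destruct Ht as [H1 H2].
  apply (Rmult_le_compat_l (qR ^ k)) in H1; [|lra].
  apply (Rmult_le_compat_l (qR ^ k)) in H2; [|lra].
  replace (qR ^ k * (INR (val q d k) / qR ^ k)) with (INR (val q d k)) in H1 by (field; lra).
  replace (qR ^ k * ((INR (val q d k) + 1) / qR ^ k)) with (INR (val q d k) + 1) in H2 by (field; lra).
  lra.
Qed.
End Exp.

Lemma K_sub01 (q n : nat) (a : nat -> Q) (K : R -> Prop) :
  (2 <= q)%nat ->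
  (forall i, (i < n)%nat -> 0 <= Q2R (a i) <= INR q - 1) ->
  is_attractor q n a K -> forall y, K y -> 0 <= y <= 1.
Proof.
  intros hq Ha [Hne [Hc HK]].
  assert (q2 : 2 <= INR q) by (replace 2 with (INR 2) by (simpl; lra); apply le_INR; auto).
  destruct (compact_P1 _ Hc) as [m [M HmM]].
  destruct (completeness K) as [S [HS1 HS2]].
  { exists M. intros x Hx. apply HmM; auto. }
  { auto. }
  destruct (completeness (fun z => K (- z))) as [S' [HS1' HS2']].
  { exists (- m). intros x Hx. apply HmM in Hx. lra. }
  { destruct Hne as [x Hx]. exists (- x). rewrite Ropp_involutive. auto. }
  assert (HS : S <= 1).
  { assert (S <= (S + INR q - 1) / INR q).
    { apply HS2. intros y Hy. apply HK in Hy as [i [x [Hi [Hx ->]]]].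
      apply div_le_pos; [lra|]. apply HS1 in Hx. specialize (Ha i Hi). lra. }
    apply (Rmult_le_compat_l (INR q)) in H; [|lra].
    replace (INR q * ((S + INR q - 1) / INR q)) with (S + INR q - 1) in H by (field; lra).
    nra. }
  assert (HS' : S' <= 0).
  { assert (S' <= S' / INR q).
    { apply HS2'. intros y Hy. apply HK in Hy as [i [x [Hi [Hx Hxe]]]].
      assert (y = (- x - Q2R (a i)) / INR q) by (rewrite <- (Ropp_involutive y), Hxe; field; lra).
      rewrite H. apply div_le_pos; [lra|]. assert (K (- - x)) by (rewrite Ropp_involutive; auto).
      apply HS1' in H0. specialize (Ha i Hi). lra. }
    apply (Rmult_le_compat_l (INR q)) in H; [|lra].
    replace (INR q * (S' / INR q)) with S' in H by (field; lra).
    nra. }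
  intros y Hy. split.
  - assert (K (- - y)) by (rewrite Ropp_involutive; auto). apply HS1' in H. lra.
  - apply HS1 in Hy. lra.
Qed.

Lemma gap (K : R -> Prop) (Hsub : forall y, K y -> 0 <= y <= 1) (Hnd : nowhere_dense_in01 K) :
  forall c d, c < d -> exists c' d', c <= c' /\ c' < d' /\ d' <= d /\ forall y, c' < y < d' -> ~ K y.
Proof.
  intros c d Hcd.
  destruct (Rle_dec d 0) as [Hd0|Hd0].
  { exists c, d. repeat split; try lra. intros y Hy HK. apply Hsub in HK. lra. }
  destruct (Rle_dec 1 c) as [Hc1|Hc1].
  { exists c, d. repeat split; try lra. intros y Hy HK. apply Hsub in HK. lra. }
  set (lo := Rmax c 0). set (hi := Rmin d 1).
  assert (c <= lo /\ 0 <= lo /\ (lo = c \/ lo = 0)) by (unfold lo, Rmax; destruct Rle_dec; lra).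
  assert (hi <= d /\ hi <= 1 /\ (hi = d \/ hi = 1)) by (unfold hi, Rmin; destruct Rle_dec; lra).
  assert (lo < hi) by lra.
  destruct (classic (exists w, lo < w < hi /\ ~ adherence K w)) as [[w [Hw Hna]]|Hno].
  - unfold adherence, point_adherent in Hna.
    apply not_all_ex_not in Hna as [V HV].
    apply imply_to_and in HV as [[del Hdel] HV].
    set (e := Rmin del (Rmin (w - c) (d - w))).
    assert (e <= del /\ e <= w - c /\ e <= d - w /\ 0 < e).
    { unfold e, Rmin. pose proof (cond_pos del). repeat destruct Rle_dec; lra. }
    exists (w - e), (w + e). repeat split; try lra.
    intros y Hy HKy. apply HV. exists y. split; auto. apply Hdel. unfold disc.
    apply Rabs_def1; lra.
  - exfalso. apply Hnd. exists (fun y => lo < y < hi). split; [|split].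
    + intros x Hx. assert (0 < Rmin (x - lo) (hi - x)) by (unfold Rmin; destruct Rle_dec; lra).
      exists (mkposreal _ H2). intros y Hy. unfold disc in Hy. simpl in Hy.
      apply Rabs_def2 in Hy. unfold Rmin in Hy. destruct Rle_dec; lra.
    + exists ((lo + hi)/2). lra.
    + intros x Hx _. apply NNPP. intro Hna. apply Hno. exists x. auto.
Qed.

Lemma gap_aff (K : R -> Prop) (Hsub : forall y, K y -> 0 <= y <= 1) (Hnd : nowhere_dense_in01 K)
  (al b : R) : al <> 0 ->
  forall u v, u < v -> exists u' v', u <= u' /\ u' < v' /\ v' <= v /\ forall s, u' < s < v' -> ~ K (al * s + b).
Proof.
  intros Hal u v Huv.
  destruct (Rlt_dec 0 al) as [Hp|Hn].
  - destruct (gap K Hsub Hnd (al * u + b) (al * v + b)) as [c' [d' [H1 [H2 [H3 H4]]]]]; [nra|].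
    exists ((c' - b) / al), ((d' - b) / al).
    assert (Hc: al * ((c' - b) / al) + b = c') by (field; lra).
    assert (Hd: al * ((d' - b) / al) + b = d') by (field; lra).
    repeat split; try (apply (Rmult_lt_reg_l al) || apply (Rmult_le_reg_l al)); try nra.
    intros s Hs. apply H4. nra.
  - assert (al < 0) by lra.
    destruct (gap K Hsub Hnd (al * v + b) (al * u + b)) as [c' [d' [H1 [H2 [H3 H4]]]]]; [nra|].
    exists ((d' - b) / al), ((c' - b) / al).
    assert (Hc: al * ((c' - b) / al) + b = c') by (field; lra).
    assert (Hd: al * ((d' - b) / al) + b = d') by (field; lra).
    repeat split; try (apply (Rmult_lt_reg_l (- al)) || apply (Rmult_le_reg_l (- al))); try nra.
    intros s Hs. apply H4. nra.
Qed.

Lemma nat_above r : exists N : nat, r < INR N.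
Proof.
  destruct (archimed (Rabs r)) as [H1 H2].
  assert (0 <= Rabs r) by apply Rabs_pos.
  assert (0 <= up (Rabs r))%Z by (apply le_IZR; lra).
  exists (Z.to_nat (up (Rabs r))). rewrite INR_IZR_INZ, Z2Nat.id by auto.
  pose proof (Rle_abs r). lra.
Qed.

Lemma gap_N (K : R -> Prop) (Hsub : forall y, K y -> 0 <= y <= 1) (Hnd : nowhere_dense_in01 K)
  (al L : R) : al <> 0 -> 0 < L -> forall N u v, u < v -> exists u' v', u <= u' /\ u' < v' /\ v' <= v /\
   forall s, u' < s < v' -> forall J, (Z.abs J <= Z.of_nat N)%Z -> ~ K (al * s + IZR J / L).
Proof.
  intros Hal HL. induction N; intros u v Huv.
  - destruct (gap_aff K Hsub Hnd al 0 Hal u v Huv) as [u' [v' [H1 [H2 [H3 H4]]]]].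
    exists u', v'. repeat split; auto. intros s Hs J HJ.
    assert (J = 0%Z) by lia. subst. replace (IZR 0 / L) with 0 by (simpl; field; lra). auto.
  - destruct (IHN u v Huv) as [u1 [v1 [H1 [H2 [H3 H4]]]]].
    destruct (gap_aff K Hsub Hnd al (IZR (Z.of_nat (S N)) / L) Hal u1 v1 H2) as [u2 [v2 [H5 [H6 [H7 H8]]]]].
    destruct (gap_aff K Hsub Hnd al (IZR (- Z.of_nat (S N)) / L) Hal u2 v2 H6) as [u3 [v3 [H9 [H10 [H11 H12]]]]].
    exists u3, v3. repeat split; try lra. intros s Hs J HJ.
    destruct (Z.eq_dec J (Z.of_nat (S N))) as [->|HJ1].
    { apply H8; lra. }
    destruct (Z.eq_dec J (- Z.of_nat (S N))) as [->|HJ2].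
    { apply H12; lra. }
    apply H4; [lra|lia].
Qed.

Lemma gap_all (K : R -> Prop) (Hsub : forall y, K y -> 0 <= y <= 1) (Hnd : nowhere_dense_in01 K)
  (al L : R) : al <> 0 -> 0 < L -> exists u v, 0 <= u /\ u < v /\ v <= 1 /\
   forall s, u < s < v -> forall J, ~ K (al * s + IZR J / L).
Proof.
  intros Hal HL. destruct (nat_above (L * (1 + Rabs al))) as [N HN].
  destruct (gap_N K Hsub Hnd al L Hal HL N 0 1 ltac:(lra)) as [u [v [H1 [H2 [H3 H4]]]]].
  exists u, v. repeat split; auto. intros s Hs J HK.
  destruct (Z_le_gt_dec (Z.abs J) (Z.of_nat N)) as [Hle|Hgt].
  { eapply H4; eauto. }
  apply Hsub in HK.
  assert (Rabs (al * s) <= Rabs al).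
  { rewrite Rabs_mult. rewrite (Rabs_right s) by lra. pose proof (Rabs_pos al). nra. }
  assert (Rabs (IZR J / L) <= 1 + Rabs al).
  { replace (IZR J / L) with ((al * s + IZR J / L) - al * s) by ring.
    eapply Rle_trans; [apply Rabs_triang|]. rewrite Rabs_Ropp.
    rewrite (Rabs_right (al * s + IZR J / L)) by lra. lra. }
  unfold Rdiv in H0. rewrite Rabs_mult, Rabs_inv, (Rabs_right L) in H0 by lra.
  rewrite Rabs_Zabs in H0.
  apply Z.gt_lt, IZR_lt in Hgt. rewrite <- INR_IZR_INZ in Hgt.
  apply (Rmult_le_compat_l L) in H0; [|lra].
  replace (L * (IZR (Z.abs J) * / L)) with (IZR (Z.abs J)) in H0 by (field; lra).
  lra.
Qed.

Lemma pow_ge_l (x : R) : 2 <= x -> forall l, INR l <= x ^ l /\ 1 <= x ^ l.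
Proof.
  intros Hx l. induction l.
  - simpl. lra.
  - rewrite S_INR. simpl. nra.
Qed.

Lemma cyl q (hq : (2 <= q)%nat) d t (Hd : forall k, (1 <= k)%nat -> (d k < q)%nat)
  (Hs : infinite_sum (fun k => INR (d (S k)) / (INR q ^ (S k))) t)
  (Hu : universal_seq q d) u v : 0 <= u -> u < v -> v <= 1 ->
  exists k, u < T q d t k < v.
Proof.
  intros Hu0 Huv Hv1.
  pose proof (qR_ge2 q hq) as Hq2.
  destruct (nat_above (3 / (v - u))) as [l Hl].
  assert (H3 : 0 < 3 / (v - u)) by (apply Rdiv_lt_0_compat; lra).
  set (Q := INR q ^ l).
  destruct (pow_ge_l (INR q) Hq2 l) as [Hl1 Hl2]. fold Q in Hl1, Hl2.
  assert (HQ : 3 < (v - u) * Q).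
  { assert (3 / (v - u) * (v - u) = 3) by (field; lra). nra. }
  destruct (archimed (u * Q)) as [A1 A2].
  assert (0 <= up (u * Q))%Z by (apply le_IZR; nra).
  set (An := Z.to_nat (up (u * Q))).
  assert (HAn : INR An = IZR (up (u * Q))) by (unfold An; rewrite INR_IZR_INZ, Z2Nat.id; auto).
  assert (HAq : (An < q ^ l)%nat).
  { apply INR_lt. rewrite pow_INR. fold Q. nra. }
  destruct (digits q ltac:(lia) l An HAq) as [w [Hw Hval]].
  assert (l <> 0%nat) by (intro; subst; simpl in Hl; lra).
  destruct (Hu l w ltac:(lia) Hw) as [k0 Hk0].
  exists k0.
  rewrite (T_shift q hq d t k0 l).
  rewrite (val_ext q _ w) by (intros; apply Hk0; auto).
  rewrite Hval, HAn. fold Q.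
  destruct (T_bounds q hq d t Hd Hs (k0 + l)) as [B1 B2].
  split.
  - apply (Rmult_lt_reg_r Q); [lra|]. unfold Rdiv. rewrite Rmult_assoc, Rinv_l, Rmult_1_r by lra. lra.
  - apply (Rmult_lt_reg_r Q); [lra|]. unfold Rdiv. rewrite Rmult_assoc, Rinv_l, Rmult_1_r by lra. nra.
Qed.

Fixpoint Dn (a : nat -> Q) (n : nat) : nat :=
  match n with O => 1%nat | S n => (Dn a n * Pos.to_nat (Qden (a n)))%nat end.

Lemma INR_pos_IZR p : INR (Pos.to_nat p) = IZR (Zpos p).
Proof. rewrite INR_IZR_INZ, positive_nat_Z. reflexivity. Qed.

Lemma Dn_pos a n : (0 < Dn a n)%nat.
Proof. induction n; simpl; [lia|]. pose proof (Pos2Nat.is_pos (Qden (a n))). nia. Qed.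

Lemma Dn_int a n : forall i, (i < n)%nat -> exists z : Z, Q2R (a i) * INR (Dn a n) = IZR z.
Proof.
  induction n; intros i Hi; [lia|].
  simpl Dn. rewrite mult_INR, INR_pos_IZR.
  destruct (Nat.eq_dec i n) as [->|Hne].
  - exists (Qnum (a n) * Z.of_nat (Dn a n))%Z. rewrite mult_IZR, <- INR_IZR_INZ.
    unfold Q2R. field. apply not_0_IZR. lia.
  - destruct (IHn i ltac:(lia)) as [z Hz]. exists (z * Zpos (Qden (a n)))%Z.
    rewrite mult_IZR, <- Hz. ring.
Qed.

Lemma orbit (q n : nat) (a : nat -> Q) (K : R -> Prop) :
  (2 <= q)%nat -> is_attractor q n a K -> forall x, K x -> forall k,
  exists y, K y /\ exists M : Z, y = INR q ^ k * x + IZR M / INR (Dn a n).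
Proof.
  intros hq [_ [_ HK]] x Hx k.
  assert (HD : 0 < INR (Dn a n)) by (apply lt_0_INR, Dn_pos).
  assert (q2 : 2 <= INR q) by (replace 2 with (INR 2) by (simpl; lra); apply le_INR; auto).
  induction k.
  - exists x. split; auto. exists 0%Z. simpl. field. lra.
  - destruct IHk as [y [Hy [M HM]]]. apply HK in Hy as [i [z [Hi [Hz Hyz]]]].
    destruct (Dn_int a n i Hi) as [zi Hzi].
    exists z. split; auto. exists (Z.of_nat q * M - zi)%Z.
    rewrite minus_IZR, mult_IZR, <- INR_IZR_INZ, <- Hzi. simpl pow.
    assert (z = INR q * y - Q2R (a i)) by (rewrite Hyz; field; lra).
    rewrite H, HM. field. lra.
Qed.

Lemma key (q n : nat) (a : nat -> Q) (K : R -> Prop) :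
  (2 <= q)%nat -> is_attractor q n a K ->
  (forall i, (i < n)%nat -> 0 <= Q2R (a i) <= INR q - 1) ->
  nowhere_dense_in01 K -> forall t, has_universal_expansion q t ->
  forall al be : Q, Q2R al <> 0 -> forall x, K x -> x = Q2R al * t + Q2R be -> False.
Proof.
  intros hq Hatt Ha Hnd t [d [[Hd Hs] Hu]] al be Hal x Hx Hxe.
  pose proof (K_sub01 q n a K hq Ha Hatt) as Hsub.
  set (D := Dn a n).
  assert (HD : 0 < INR D) by (apply lt_0_INR, Dn_pos).
  assert (H1 : 0 < IZR (Zpos (Qden al))) by (apply IZR_lt; lia).
  assert (H2 : 0 < IZR (Zpos (Qden be))) by (apply IZR_lt; lia).
  set (L := IZR (Zpos (Qden al)) * IZR (Zpos (Qden be)) * INR D).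
  assert (HL : 0 < L) by (unfold L; apply Rmult_lt_0_compat; [apply Rmult_lt_0_compat|]; auto).
  destruct (gap_all K Hsub Hnd (Q2R al) L Hal HL) as [u [v [U1 [U2 [U3 U4]]]]].
  destruct (cyl q hq d t Hd Hs Hu u v U1 U2 U3) as [k Hk].
  destruct (orbit q n a K hq Hatt x Hx k) as [y [Hy [M HM]]].
  set (J := (Qnum al * Z.of_nat (val q d k) * Zpos (Qden be) * Z.of_nat D
     + Z.of_nat (q ^ k) * Qnum be * Zpos (Qden al) * Z.of_nat D
     + M * Zpos (Qden al) * Zpos (Qden be))%Z).
  apply (U4 _ Hk J).
  replace (Q2R al * T q d t k + IZR J / L) with y; auto.
  rewrite HM, Hxe. unfold J, L, T. fold D.
  rewrite !plus_IZR, !mult_IZR, <- !INR_IZR_INZ, pow_INR.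
  unfold Q2R. field. repeat split; lra.
Qed.

Lemma QQ1 : Q2R 1 = 1. Proof. unfold Q2R; simpl; field. Qed.
Lemma QQm1 : Q2R (-1) = -1. Proof. unfold Q2R; simpl; field. Qed.
Lemma QQ0 : Q2R 0 = 0. Proof. unfold Q2R; simpl; field. Qed.

Theorem theorem5 (q n : nat) (a : nat -> Q) (K : R -> Prop) :
  (3 <= q)%nat -> (1 <= n)%nat ->
  (forall i, (i < n)%nat -> 0 <= Q2R (a i) <= INR q - 1) ->
  is_attractor q n a K ->
  nowhere_dense_in01 K ->
  (forall t, 0 < t < 1 -> has_universal_expansion q t ->
     (forall x, K x -> irrational (x - t)) /\
     (forall x, K x -> irrational (x + t)) /\
     (forall x, K x -> x <> 0 -> irrational (x / t))) /\
  (forall t, 1 < t -> has_universal_expansion q (/ t) ->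
     forall x, K x -> x <> 0 -> irrational (t * x)).
Proof.
  intros hq3 hn Ha Hatt Hnd.
  assert (hq : (2 <= q)%nat) by lia.
  pose proof (key q n a K hq Hatt Ha Hnd) as Hk.
  split.
  - intros t Ht Hun. split; [|split].
    + intros x Hx r Hr. apply (Hk t Hun 1%Q r) with (x := x); auto.
      * rewrite QQ1. lra.
      * rewrite QQ1. lra.
    + intros x Hx r Hr. apply (Hk t Hun (-1)%Q r) with (x := x); auto.
      * rewrite QQm1. lra.
      * rewrite QQm1. lra.
    + intros x Hx Hx0 r Hr. apply (Hk t Hun r 0%Q) with (x := x); auto.
      * intro H0. rewrite H0 in Hr. apply Hx0.
        apply (Rmult_eq_reg_r (/ t)); [|apply Rinv_neq_0_compat; lra]. unfold Rdiv in Hr. lra.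
      * rewrite QQ0. rewrite <- Hr. field. lra.
  - intros t Ht Hun x Hx Hx0 r Hr. apply (Hk (/ t) Hun r 0%Q) with (x := x); auto.
    + intro H0. rewrite H0 in Hr. apply Hx0.
      apply (Rmult_eq_reg_l t); lra.
    + rewrite QQ0, <- Hr. field. lra.
Qed.
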